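(* Let $n\ge1$ be an integer, $\beta>0$ and $0<\gamma\le1$. Let $(s,z)$ be the Nielsen–Olesen vortex profile (see context), and for an integer $m$ set $x=(\gamma-1)z-\frac{2\gamma n+m}{2r}$, $y=\gamma z-\frac{2\gamma n+m}{2r}$. Then for no integer $m$ do there exist real functions $u,v$ on $(0,\infty)$, not both identically zero, satisfying the linearized equations \begin{align*} &v''+\tfrac{v'}{r}-\tfrac{v}{r^2}+2\big(2y'u+yu'+\tfrac{1}{r}yu\big)-\gamma v s^2=0,\\ &v'y-vy'+\big(2y^2+\tfrac{\gamma}{2}s^2\big)u=0, \end{align*} with the finite-energy boundary conditions $u=u_0r^k(1+o(1))$, $v=v_0r^k(1+o(1))$ as $r\to0$ for some $k>-\tfrac12$, and exponential decay of $u,v$ (like $e^{-\sqrt\gamma\, r}$ up to powers of $r$) as $r\to\infty$. That is, in the gauge where the Higgs doublet has a single (lower) component, there is no perturbative solution of the Euler–Lagrange equations about the embedded Nielsen–Olesen ($Z_{NO}$) vortex configuration.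
   Context: The Nielsen–Olesen vortex profile $(s,z)$ with winding number $n$ consists of real functions on $(0,\infty)$ solving $s''+\frac{s'}{r}-[z^2+\frac{\beta}{2}(s^2-1)]s=0$ and $z''+\frac{z'}{r}-\frac{z}{r^2}-zs^2=0$, with $s=s_0r^n(1+o(1))$, $z=\frac nr+z_0r+o(r)$ as $r\to0$ and $s\to1$, $z\to0$ exponentially as $r\to\infty$. The lower Higgs component is $\Phi_0 s e^{in\varphi}$ and $u,v$ are the radial/azimuthal profiles of a $W$ field $\propto[u\,\mathbf e_r+iv\,\mathbf e_\varphi]e^{im\varphi}$; to lowest order in $u,v$ the other fields stay at their vortex values $s$, $x$, $y$ above. $\beta=(M_H/M_Z)^2$, $\gamma=\cos^2\theta_{\rm w}$. *)

(* Defs.v *)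
From Stdlib Require Import Reals ZArith.
From Coquelicot Require Import Coquelicot.
Open Scope R_scope.

Definition lim0r (f : R -> R) (l : R) : Prop :=
  filterlim f (at_right 0) (locally l).

Definition NO_profile (n : nat) (beta : R) (s z : R -> R) : Prop :=
  (forall r, 0 < r ->
     ex_derive s r /\ ex_derive (Derive s) r /\
     ex_derive z r /\ ex_derive (Derive z) r) /\
  (forall r, 0 < r ->
     Derive (Derive s) r + Derive s r / r
     - (z r ^ 2 + beta / 2 * (s r ^ 2 - 1)) * s r = 0) /\
  (forall r, 0 < r ->
     Derive (Derive z) r + Derive z r / r - z r / r ^ 2 - z r * s r ^ 2 = 0) /\
  (exists s0 eps, lim0r eps 0 /\
     forall r, 0 < r -> s r = s0 * r ^ n * (1 + eps r)) /\
  (exists z0 eps, lim0r eps 0 /\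
     forall r, 0 < r -> z r = INR n / r + z0 * r + r * eps r) /\
  (exists C a R0, 0 < a /\
     forall r, R0 < r ->
       Rabs (s r - 1) <= C * exp (- a * r) /\ Rabs (z r) <= C * exp (- a * r)).

Definition yfun (gamma : R) (n : nat) (m : Z) (z : R -> R) : R -> R :=
  fun r => gamma * z r - (2 * gamma * INR n + IZR m) / (2 * r).

(* x = (gamma-1) z - (2 gamma n + m)/(2r)  (does not enter the equations below) *)
Definition xfun (gamma : R) (n : nat) (m : Z) (z : R -> R) : R -> R :=
  fun r => (gamma - 1) * z r - (2 * gamma * INR n + IZR m) / (2 * r).

Definition W_perturbation (gamma : R) (n : nat) (m : Z) (s z u v : R -> R) : Prop :=
  let y := yfun gamma n m z in
  (forall r, 0 < r ->
     ex_derive u r /\ ex_derive v r /\ ex_derive (Derive v) r) /\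
  (forall r, 0 < r ->
     Derive (Derive v) r + Derive v r / r - v r / r ^ 2
     + 2 * (2 * Derive y r * u r + y r * Derive u r + y r * u r / r)
     - gamma * v r * s r ^ 2 = 0) /\
  (forall r, 0 < r ->
     Derive v r * y r - v r * Derive y r
     + (2 * y r ^ 2 + gamma / 2 * s r ^ 2) * u r = 0) /\
  (exists k u0 v0 eu ev, -1/2 < k /\ lim0r eu 0 /\ lim0r ev 0 /\
     forall r, 0 < r ->
       u r = u0 * Rpower r k * (1 + eu r) /\ v r = v0 * Rpower r k * (1 + ev r)) /\
  (exists C p R0, 0 < R0 /\ forall r, R0 < r ->
     Rabs (u r) <= C * Rpower r p * exp (- sqrt gamma * r) /\
     Rabs (v r) <= C * Rpower r p * exp (- sqrt gamma * r)).

(* Main.v *)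
Require Import Defs.
From Stdlib Require Import Reals ZArith Lra Lia Psatz Classical.
From Coquelicot Require Import Coquelicot.
Open Scope R_scope.


Lemma lim0r_eps (f : R -> R) l :
  lim0r f l <-> (forall eps, 0 < eps -> exists d, 0 < d /\
     forall t, 0 < t < d -> Rabs (f t - l) < eps).
Proof.
split.
- intros H eps He.
  assert (Hl : locally l (fun y => Rabs (y - l) < eps)).
  { exists (mkposreal eps He). intros y Hy. exact Hy. }
  specialize (H _ Hl). destruct H as [d Hd].
  exists d. split. apply cond_pos. intros t [Ht1 Ht2].
  apply Hd; auto. change (Rabs (t - 0) < d). rewrite Rminus_0_r, Rabs_pos_eq; lra.
- intros H P [e He].
  destruct (H e (cond_pos e)) as [d [Hd Hd2]].
  exists (mkposreal d Hd). intros y Hy Hy0. apply He. apply Hd2.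
  change (Rabs (y - 0) < d) in Hy. rewrite Rminus_0_r, Rabs_pos_eq in Hy; lra.
Qed.

Lemma lim0r_plus f g a b : lim0r f a -> lim0r g b -> lim0r (fun t => f t + g t) (a + b).
Proof. intros Hf Hg. unfold lim0r.
  apply (filterlim_comp_2 f g Rplus Hf Hg). apply (filterlim_plus a b). Qed.
Lemma lim0r_mult f g a b : lim0r f a -> lim0r g b -> lim0r (fun t => f t * g t) (a * b).
Proof. intros Hf Hg. unfold lim0r.
  apply (filterlim_comp_2 f g Rmult Hf Hg). apply (filterlim_mult a b). Qed.
Lemma lim0r_const c : lim0r (fun _ => c) c.
Proof. apply filterlim_const. Qed.
Lemma lim0r_inv f a : a <> 0 -> lim0r f a -> lim0r (fun t => / f t) (/ a).
Proof. intros Ha Hf. unfold lim0r. eapply filterlim_comp. apply Hf.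
  apply (filterlim_Rbar_inv a). intro H; injection H; auto. Qed.
Lemma lim0r_opp f a : lim0r f a -> lim0r (fun t => - f t) (- a).
Proof. intros H. replace (- a) with (-1 * a) by ring.
  eapply filterlim_ext. 2: apply (lim0r_mult (fun _ => -1) f (-1) a (lim0r_const _) H).
  intros x; simpl; ring. Qed.
Lemma lim0r_minus f g a b : lim0r f a -> lim0r g b -> lim0r (fun t => f t - g t) (a - b).
Proof. intros. apply lim0r_plus; auto. apply lim0r_opp; auto. Qed.

Lemma lim0r_ext f g l d : 0 < d -> (forall t, 0 < t < d -> f t = g t) -> lim0r f l -> lim0r g l.
Proof. intros Hd H Hf. apply lim0r_eps. intros e He.
  destruct (proj1 (lim0r_eps f l) Hf e He) as [d1 [Hd1 H1]].
  exists (Rmin d d1). split. apply Rmin_pos; lra.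
  intros t Ht. rewrite <- H. apply H1. split. lra. apply Rlt_le_trans with (1 := proj2 Ht); apply Rmin_r.
  split. lra. apply Rlt_le_trans with (1 := proj2 Ht); apply Rmin_l. Qed.

Lemma cont_of_ex_derive f x : ex_derive f x -> continuity_pt f x.
Proof. intros H. apply continuity_pt_filterlim. apply (ex_derive_continuous (K:=R_AbsRing) (V:=R_NormedModule)). exact H. Qed.

Lemma lhop (F G : R -> R) L d : 0 < d ->
  (forall t, 0 < t < d -> ex_derive F t /\ ex_derive G t /\ Derive G t <> 0 /\ G t <> 0) ->
  lim0r F 0 -> lim0r G 0 -> lim0r (fun t => Derive F t / Derive G t) L ->
  lim0r (fun t => F t / G t) L.
Proof.
intros Hd HD HF HG HL. apply lim0r_eps. intros e He.
destruct (proj1 (lim0r_eps _ _) HL (e/2)) as [d1 [Hd1 H1]]. lra.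
exists (Rmin d d1). split. apply Rmin_pos; lra.
intros t Ht.
assert (Htd : t < d). apply Rlt_le_trans with (1 := proj2 Ht); apply Rmin_l.
assert (Htd1 : t < d1). apply Rlt_le_trans with (1 := proj2 Ht); apply Rmin_r.
destruct (HD t) as [_ [_ [_ HGt]]]. lra.
assert (Hq : lim0r (fun a => (F t - F a) * / (G t - G a)) ((F t - 0) * / (G t - 0))).
{ apply lim0r_mult. apply lim0r_minus. apply lim0r_const. exact HF.
  apply lim0r_inv. lra. apply lim0r_minus. apply lim0r_const. exact HG. }
destruct (proj1 (lim0r_eps _ _) Hq (e/2)) as [d2 [Hd2 H2]]. lra.
set (a := Rmin (t/2) (d2/2)).
assert (Ha : 0 < a < t). { unfold a. split. apply Rmin_pos; lra.
   apply Rle_lt_trans with (t/2). apply Rmin_l. lra. }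
assert (Ha2 : a < d2). { unfold a. apply Rle_lt_trans with (d2/2). apply Rmin_r. lra. }
specialize (H2 a (conj (proj1 Ha) Ha2)).
assert (Hdd : forall x, a <= x <= t -> ex_derive F x /\ ex_derive G x /\ Derive G x <> 0).
{ intros x Hx. destruct (HD x) as [h1 [h2 [h3 _]]]. lra. auto. }
destruct (MVT_gen G a t (Derive G)) as [c2 [Hc2 Hc2']].
{ intros x Hx. rewrite Rmin_left in Hx by lra. rewrite Rmax_right in Hx by lra.
  apply Derive_correct. apply Hdd. lra. }
{ intros x Hx. rewrite Rmin_left in Hx by lra. rewrite Rmax_right in Hx by lra.
  apply cont_of_ex_derive. apply Hdd. lra. }
rewrite Rmin_left in Hc2 by lra. rewrite Rmax_right in Hc2 by lra.
assert (HGne : G t - G a <> 0).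
{ rewrite Hc2'. apply Rmult_integral_contrapositive. split. apply Hdd. lra. lra. }
set (h := fun x => (G t - G a) * F x - (F t - F a) * G x).
destruct (MVT_gen h a t (fun x => (G t - G a) * Derive F x - (F t - F a) * Derive G x)) as [c [Hc Hc']].
{ intros x Hx. rewrite Rmin_left in Hx by lra. rewrite Rmax_right in Hx by lra.
  unfold h. destruct (Hdd x) as [h1 [h2 _]]. lra.
  auto_derive. repeat split; auto. unfold Rminus; rewrite !Rmult_1_l; reflexivity. }
{ intros x Hx. rewrite Rmin_left in Hx by lra. rewrite Rmax_right in Hx by lra.
  unfold h. destruct (Hdd x) as [h1 [h2 _]]. lra.
  apply cont_of_ex_derive; auto_derive; repeat split; auto. }
rewrite Rmin_left in Hc by lra. rewrite Rmax_right in Hc by lra.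
assert (Hz : (G t - G a) * Derive F c - (F t - F a) * Derive G c = 0).
{ assert (h t - h a = 0) by (unfold h; ring). rewrite Hc' in H.
  apply Rmult_integral in H. destruct H; auto. lra. }
destruct (Hdd c) as [_ [_ HGc]]. lra.
specialize (H1 c).
assert (Hr : Derive F c / Derive G c = (F t - F a) * / (G t - G a)).
{ field_simplify_eq; auto. lra. }
rewrite Hr in H1.
assert (0 < c < d1) by lra. specialize (H1 H).
replace ((F t - 0) * / (G t - 0)) with (F t / G t) in H2 by (rewrite !Rminus_0_r; reflexivity).
apply Rle_lt_trans with (Rabs (F t / G t - (F t - F a) * / (G t - G a)) + Rabs ((F t - F a) * / (G t - G a) - L)).
replace (F t / G t - L) with ((F t / G t - (F t - F a) * / (G t - G a)) + ((F t - F a) * / (G t - G a) - L)) by ring.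
apply Rabs_triang. rewrite Rabs_minus_sym. lra.
Qed.

Lemma nonincr (h : R -> R) a b : a <= b ->
  (forall t, a <= t <= b -> ex_derive h t /\ Derive h t <= 0) -> h b <= h a.
Proof. intros Hab H.
  destruct (MVT_gen h a b (Derive h)) as [c [Hc Hc']].
  { intros x Hx. rewrite Rmin_left in Hx by lra. rewrite Rmax_right in Hx by lra.
    apply Derive_correct. apply H. lra. }
  { intros x Hx. rewrite Rmin_left in Hx by lra. rewrite Rmax_right in Hx by lra.
    apply cont_of_ex_derive. apply H. lra. }
  rewrite Rmin_left in Hc by lra. rewrite Rmax_right in Hc by lra.
  assert (Derive h c <= 0) by (apply H; lra).
  assert (Derive h c * (b - a) <= 0). { apply Rmult_le_0_r; lra. } lra. Qed.

Lemma nondecr (h : R -> R) a b : a <= b ->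
  (forall t, a <= t <= b -> ex_derive h t /\ 0 <= Derive h t) -> h a <= h b.
Proof. intros Hab H.
  assert (- h b <= - h a). 2: lra.
  apply (nonincr (fun t => - h t)); auto. intros t Ht. destruct (H t Ht) as [H1 H2].
  split. auto_derive; auto. rewrite Derive_opp. lra. Qed.

Lemma strict_incr (h : R -> R) a b : a < b ->
  (forall t, a <= t <= b -> ex_derive h t /\ 0 < Derive h t) -> h a < h b.
Proof. intros Hab H.
  destruct (MVT_gen h a b (Derive h)) as [c [Hc Hc']].
  { intros x Hx. rewrite Rmin_left in Hx by lra. rewrite Rmax_right in Hx by lra.
    apply Derive_correct. apply H. lra. }
  { intros x Hx. rewrite Rmin_left in Hx by lra. rewrite Rmax_right in Hx by lra.
    apply cont_of_ex_derive. apply H. lra. }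
  rewrite Rmin_left in Hc by lra. rewrite Rmax_right in Hc by lra.
  assert (0 < Derive h c) by (apply H; lra).
  assert (0 < Derive h c * (b - a)). { apply Rmult_lt_0_compat; lra. } lra. Qed.

Lemma min_deriv0 (f : R -> R) a b c : a < c < b ->
  (forall x, a < x < b -> f c <= f x) -> ex_derive f c -> Derive f c = 0.
Proof. intros Hc Hm Hd.
  assert (pr : derivable_pt f c).
  { exists (Derive f c). apply is_derive_Reals. apply Derive_correct. auto. }
  assert (E : derive_pt f c pr = Derive f c).
  { apply derive_pt_eq_0. apply is_derive_Reals. apply Derive_correct. auto. }
  rewrite <- E. apply (deriv_minimum f a b c pr); try lra. intros; apply Hm; lra. Qed.

Lemma Derive_Rpower q t : 0 < t -> is_derive (fun x => Rpower x q) t (q * Rpower t (q - 1)).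
Proof. intros Ht. apply is_derive_Reals. apply derivable_pt_lim_power. auto. Qed.

Lemma Rpower_pos' t q : 0 < Rpower t q.
Proof. unfold Rpower. apply exp_pos. Qed.

Lemma lim0r_Rpower q : 0 < q -> lim0r (fun t => Rpower t q) 0.
Proof. intros Hq. apply lim0r_eps. intros e He.
  exists (Rpower e (/ q)). split. apply Rpower_pos'.
  intros t [Ht1 Ht2]. rewrite Rminus_0_r, Rabs_pos_eq by (apply Rlt_le, Rpower_pos').
  replace e with (Rpower (Rpower e (/ q)) q).
  apply Rlt_Rpower_l; auto.
  rewrite Rpower_mult. rewrite Rinv_l by lra. apply Rpower_1; auto. Qed.

Lemma cont_eps h m : continuity_pt h m -> forall e, 0 < e -> exists d, 0 < d /\
  forall x, Rabs (x - m) < d -> Rabs (h x - h m) < e.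
Proof. intros H e He. destruct (H e He) as [d [Hd Hd2]]. exists d. split. lra.
  intros x Hx. destruct (Req_dec x m) as [->|Hne]. rewrite Rminus_diag, Rabs_R0; lra.
  apply (Hd2 x). split. split. exact I. auto. exact Hx. Qed.

Lemma first_cross (h : R -> R) a b L : a < b ->
  (forall t, a <= t <= b -> continuity_pt h t) -> h a < L -> L <= h b ->
  exists t, a < t <= b /\ h t = L /\ forall tau, a <= tau < t -> h tau < L.
Proof.
intros Hab Hc Ha Hb.
set (E := fun x => a <= x <= b /\ forall tau, a <= tau <= x -> h tau < L).
assert (HE : E a). { split. lra. intros tau Ht. replace tau with a by lra. auto. }
assert (Hbd : bound E). { exists b. intros x [Hx _]. lra. }
destruct (completeness E Hbd (ex_intro _ a HE)) as [m [Hub Hlub]].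
assert (Ham : a <= m) by (apply Hub; auto).
assert (Hmb : m <= b) by (apply Hlub; intros x [Hx _]; lra).
assert (H1 : forall tau, a <= tau < m -> h tau < L).
{ intros tau Ht. destruct (classic (exists x, E x /\ tau < x)) as [[x [[Hx1 Hx2] Hx3]]|Hn].
  apply Hx2. lra.
  exfalso. assert (m <= tau). apply Hlub. intros x Hx. apply Rnot_lt_le. intro. apply Hn. eauto. lra. }
assert (H2 : L <= h m).
{ apply Rnot_lt_le. intro Hlt.
  destruct (Req_dec m b) as [Heq|Hne]. subst m. lra.
  destruct (cont_eps h m (Hc m (conj Ham Hmb)) (L - h m)) as [d [Hd Hd2]]. lra.
  set (x := Rmin (m + d/2) b).
  assert (Ex : E x).
  { split. unfold x. split. apply Rmin_glb; lra. apply Rmin_r.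
    intros tau Ht. destruct (Rlt_le_dec tau m). apply H1; lra.
    assert (Rabs (tau - m) < d). { rewrite Rabs_pos_eq by lra.
      assert (tau <= m + d/2). apply Rle_trans with x. lra. apply Rmin_l. lra. }
    specialize (Hd2 tau H). apply Rabs_lt_between in Hd2. lra. }
  assert (x <= m) by (apply Hub; auto).
  assert (m < x). { unfold x. apply Rmin_glb_lt; lra. } lra. }
assert (H3 : h m <= L).
{ apply Rnot_lt_le. intro Hlt.
  destruct (Req_dec m a) as [Heq|Hne]. subst m. lra.
  destruct (cont_eps h m (Hc m (conj Ham Hmb)) (h m - L)) as [d [Hd Hd2]]. lra.
  set (tau := Rmax a (m - d/2)).
  assert (Ht1 : a <= tau < m). { unfold tau. split. apply Rmax_l. apply Rmax_lub_lt; lra. }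
  assert (Ht2 : Rabs (tau - m) < d). { rewrite Rabs_minus_sym, Rabs_pos_eq by lra.
     assert (m - d/2 <= tau) by apply Rmax_r. lra. }
  specialize (Hd2 tau Ht2). apply Rabs_lt_between in Hd2. specialize (H1 tau Ht1). lra. }
exists m. split. split; try lra. destruct (Req_dec m a) as [Heq|Hne]. subst m. lra. lra.
split. lra. auto.
Qed.

Lemma ln_le_xm1 x : 0 < x -> ln x <= x - 1.
Proof. intros Hx. pose proof (exp_ineq1_le (ln x)). rewrite exp_ln in H by auto. lra. Qed.

Lemma exp_decay b K q eps : 0 < b -> 0 < eps -> exists R0, 0 < R0 /\ forall r, R0 < r ->
  Rabs K * Rpower r q * exp (- b * r) < eps.
Proof.
intros Hb He.
set (lam := b / (2 * (Rabs q + 1))).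
assert (Hlam : 0 < lam). { unfold lam. apply Rdiv_lt_0_compat. lra. pose proof (Rabs_pos q). lra. }
set (C0 := Rabs q * Rabs (1 + ln lam)).
set (M := Rabs K * exp C0).
assert (HM : 0 <= M). { unfold M. apply Rmult_le_pos. apply Rabs_pos. apply Rlt_le, exp_pos. }
exists (1 + 2 * M / (b * eps)). split.
{ assert (0 <= 2 * M / (b * eps)). apply Rmult_le_pos. lra. apply Rlt_le, Rinv_0_lt_compat. nra. lra. }
intros r Hr.
assert (H1 : 1 <= r). { assert (0 <= 2 * M / (b * eps)). apply Rmult_le_pos. lra. apply Rlt_le, Rinv_0_lt_compat. nra. lra. }
assert (Hln : 0 <= ln r). { rewrite <- ln_1. destruct (Req_dec r 1). subst; lra. apply Rlt_le, ln_increasing; lra. }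
assert (Hql : q * ln r <= b / 2 * r + C0).
{ assert (q * ln r <= Rabs q * ln r). { apply Rmult_le_compat_r; auto. apply Rle_abs. }
  assert (ln r = ln (lam * r) - ln lam). { rewrite ln_mult by lra. ring. }
  assert (ln (lam * r) <= lam * r - 1). { apply ln_le_xm1. nra. }
  assert (Rabs q * ln r <= Rabs q * (lam * r) + Rabs q * (- 1 - ln lam)).
  { rewrite H0. rewrite <- Rmult_plus_distr_l. apply Rmult_le_compat_l. apply Rabs_pos. lra. }
  assert (Rabs q * (lam * r) <= b / 2 * r).
  { unfold lam. pose proof (Rabs_pos q).
    replace (Rabs q * (b / (2 * (Rabs q + 1)) * r)) with ((b/2 * r) * (Rabs q / (Rabs q + 1))) by (field; lra).
    rewrite <- (Rmult_1_r (b/2*r)) at 2. apply Rmult_le_compat_l. nra.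
    apply Rmult_le_reg_r with (Rabs q + 1). lra. unfold Rdiv. rewrite Rmult_assoc, Rinv_l by lra. lra. }
  assert (Rabs q * (- 1 - ln lam) <= C0).
  { unfold C0. replace (-1 - ln lam) with (- (1 + ln lam)) by ring. rewrite <- Ropp_mult_distr_r.
    pose proof (Rle_abs (- (Rabs q * (1 + ln lam)))). rewrite Rabs_Ropp, Rabs_mult, Rabs_Rabsolu in H5. lra. }
  lra. }
assert (Hexp : Rpower r q * exp (- b * r) <= exp C0 * exp (- (b / 2 * r))).
{ unfold Rpower. rewrite <- !exp_plus. destruct (Req_dec (q * ln r + - b * r) (C0 + - (b / 2 * r))) as [E|E].
  rewrite E; lra. apply Rlt_le, exp_increasing. lra. }
assert (Hexp2 : exp (- (b / 2 * r)) <= / (1 + b/2 * r)).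
{ pose proof (exp_ineq1_le (b/2*r)). rewrite exp_Ropp. apply Rinv_le_contravar. nra. auto. }
assert (Rabs K * Rpower r q * exp (- b * r) <= M * / (1 + b/2 * r)).
{ rewrite Rmult_assoc. unfold M. rewrite Rmult_assoc. apply Rmult_le_compat_l. apply Rabs_pos.
  apply Rle_trans with (1 := Hexp). apply Rmult_le_compat_l. apply Rlt_le, exp_pos. auto. }
assert (M * / (1 + b / 2 * r) < eps).
{ apply Rmult_lt_reg_r with (1 + b/2*r). nra. rewrite Rmult_assoc, Rinv_l by nra. rewrite Rmult_1_r.
  assert (HH : 2 * M / (b * eps) < r) by lra.
  assert (2 * M < r * (b * eps)). { apply Rmult_lt_reg_r with (/ (b * eps)). apply Rinv_0_lt_compat; nra.
    unfold Rdiv in HH. replace (r * (b * eps) * / (b * eps)) with r by (field; nra). lra. } nra. }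
lra.
Qed.

Lemma loc_pos (P : R -> Prop) r : 0 < r -> (forall t, 0 < t -> P t) -> locally r P.
Proof. intros Hr H. apply (locally_interval P r 0 p_infty); simpl; auto. Qed.

Lemma Derive0_loc (h : R -> R) r : 0 < r -> (forall t, 0 < t -> h t = 0) -> Derive h r = 0.
Proof. intros Hr H. rewrite (Derive_ext_loc h (fun _ => 0)). apply Derive_const.
  apply loc_pos; auto. Qed.

Lemma lim0r_le h l c r : lim0r h l -> 0 < r -> (forall a, 0 < a < r -> h a <= c) -> l <= c.
Proof. intros Hl Hr H. apply Rnot_lt_le. intro Hc.
  destruct (proj1 (lim0r_eps h l) Hl (l - c)) as [d [Hd Hd2]]. lra.
  set (a := Rmin (d/2) (r/2)).
  assert (0 < a). apply Rmin_pos; lra.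
  assert (a < d). unfold a. apply Rle_lt_trans with (d/2). apply Rmin_l. lra.
  assert (a < r). unfold a. apply Rle_lt_trans with (r/2). apply Rmin_r. lra.
  specialize (Hd2 a (conj H0 H1)). specialize (H a (conj H0 H2)).
  apply Rabs_lt_between in Hd2. lra. Qed.

Lemma lim0r_ge h l c r : lim0r h l -> 0 < r -> (forall a, 0 < a < r -> c <= h a) -> c <= l.
Proof. intros Hl Hr H. assert (- l <= - c). 2: lra.
  apply (lim0r_le (fun t => - h t) (- l) (- c) r). apply lim0r_opp; auto. auto.
  intros a Ha. specialize (H a Ha). lra. Qed.

Lemma Dy gamma n m z r : 0 < r -> ex_derive z r ->
  Derive (yfun gamma n m z) r = gamma * Derive z r + (2 * gamma * INR n + IZR m) / (2 * r ^ 2).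
Proof. intros Hr Hz. apply is_derive_unique. unfold yfun.
  auto_derive. repeat split; auto. lra. change (Derive (fun x => z x) r) with (Derive z r). field. lra. Qed.

Lemma ex_Dy gamma n m z r : 0 < r -> ex_derive z r -> ex_derive (yfun gamma n m z) r.
Proof. intros Hr Hz. unfold yfun. auto_derive. repeat split; auto. lra. Qed.

Lemma DDy gamma n m z r : 0 < r -> (forall t, 0 < t -> ex_derive z t) -> ex_derive (Derive z) r ->
  is_derive (Derive (yfun gamma n m z)) r
    (gamma * Derive (Derive z) r - (2 * gamma * INR n + IZR m) / r ^ 3).
Proof. intros Hr Hz Hz2.
  apply (is_derive_ext_loc (fun t => gamma * Derive z t + (2 * gamma * INR n + IZR m) / (2 * t ^ 2))).
  { apply (locally_interval _ r 0 p_infty); simpl; auto. intros t Ht _. rewrite Dy; auto. }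
  auto_derive. repeat split; auto. nra. change (Derive (fun x => Derive z x) r) with (Derive (Derive z) r). field. lra. Qed.

Definition gfun (z : R -> R) := fun r => z r / r + Derive z r.
Definition ffun (z : R -> R) := fun r => r * z r.

Lemma g_deriv n beta s z r : NO_profile n beta s z -> 0 < r ->
  is_derive (gfun z) r (z r * s r ^ 2).
Proof. intros [HD [_ [Hz _]]] Hr. destruct (HD r Hr) as [_ [_ [H1 H2]]].
  unfold gfun. auto_derive. repeat split; auto. lra.
  change (Derive (fun x => z x) r) with (Derive z r).
  change (Derive (fun x => Derive z x) r) with (Derive (Derive z) r).
  specialize (Hz r Hr). 
  apply Rmult_eq_reg_r with (r^2). 2: apply pow_nonzero; lra.
  field_simplify; try lra.
  assert (E : Derive z r * r + r^2 * Derive (Derive z) r - z r - r^2 * z r * s r^2 =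
     r^2 * (Derive (Derive z) r + Derive z r / r - z r / r ^ 2 - z r * s r ^ 2)) by (field; lra).
  rewrite Hz in E. lra. Qed.

Lemma f_deriv n beta s z r : NO_profile n beta s z -> 0 < r ->
  is_derive (ffun z) r (r * gfun z r).
Proof. intros [HD _] Hr. destruct (HD r Hr) as [_ [_ [H1 H2]]].
  unfold ffun, gfun. auto_derive. auto. change (Derive (fun x => z x) r) with (Derive z r). field. lra. Qed.

Lemma f_exd n beta s z r : NO_profile n beta s z -> 0 < r -> ex_derive (ffun z) r.
Proof. intros H Hr. eexists. apply (f_deriv n beta s z r H Hr). Qed.

Lemma g_exd n beta s z r : NO_profile n beta s z -> 0 < r -> ex_derive (gfun z) r.
Proof. intros H Hr. eexists. apply (g_deriv n beta s z r H Hr). Qed.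

Lemma lim0r_id : lim0r (fun t => t) 0.
Proof. apply lim0r_eps; intros e He'; exists e; split; auto; intros t Ht; rewrite Rminus_0_r, Rabs_pos_eq; lra. Qed.

Lemma f_lim0 n beta s z : NO_profile n beta s z -> lim0r (ffun z) (INR n).
Proof. intros [_ [_ [_ [_ [[z0 [eps [He Hz]]] _]]]]].
  apply (lim0r_ext (fun r => INR n + r * r * (z0 + eps r)) _ _ 1). lra.
  intros t Ht. unfold ffun. rewrite Hz by lra. field. lra.
  assert (L : lim0r (fun r => INR n + r * r * (z0 + eps r)) (INR n + 0 * 0 * (z0 + 0))).
  { apply lim0r_plus. apply lim0r_const. apply lim0r_mult. apply lim0r_mult.
    1,2: apply lim0r_id.
    apply lim0r_plus. apply lim0r_const. auto. }
  replace (INR n + 0 * 0 * (z0 + 0)) with (INR n) in L by ring. exact L. Qed.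

Lemma f_liminf n beta s z : NO_profile n beta s z -> forall e, 0 < e -> exists R0, 0 < R0 /\
  forall r, R0 < r -> Rabs (ffun z r) < e.
Proof. intros [_ [_ [_ [_ [_ [C [a [R0 [Ha HC]]]]]]]]] e He.
  destruct (exp_decay a C 1 e Ha He) as [R1 [HR1 H1]].
  exists (Rmax R0 R1). split. apply Rlt_le_trans with R1; auto. apply Rmax_r.
  intros r Hr. assert (R0 < r) by (apply Rle_lt_trans with (2 := Hr); apply Rmax_l).
  assert (R1 < r) by (apply Rle_lt_trans with (2 := Hr); apply Rmax_r).
  specialize (H1 r H0). rewrite Rpower_1 in H1 by lra.
  destruct (HC r H) as [_ Hz]. unfold ffun. rewrite Rabs_mult, Rabs_pos_eq by lra.
  apply Rle_lt_trans with (2 := H1).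
  replace (Rabs C * r * exp (- a * r)) with (r * (Rabs C * exp (- a * r))) by ring.
  apply Rmult_le_compat_l. lra. apply Rle_trans with (1 := Hz).
  apply Rmult_le_compat_r. apply Rlt_le, exp_pos. apply Rle_abs. Qed.

Lemma s_facts n beta s z : NO_profile n beta s z -> exists s0 eps, lim0r eps 0 /\
  (forall r, 0 < r -> s r = s0 * r ^ n * (1 + eps r)) /\ s0 <> 0.
Proof. intros [_ [_ [_ [[s0 [eps [He Hs]]] [_ [C [a [R0 [Ha HC]]]]]]]]].
  exists s0, eps. split; auto. split; auto. intro H0.
  destruct (exp_decay a C 0 (1/2) Ha) as [R1 [HR1 H1]]. lra.
  set (r := Rmax R0 R1 + 1).
  assert (R0 < r). unfold r. pose proof (Rmax_l R0 R1). lra.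
  assert (R1 < r). unfold r. pose proof (Rmax_r R0 R1). lra.
  specialize (H1 r H2). rewrite Rpower_O in H1 by lra.
  destruct (HC r H) as [Hs1 _]. rewrite Hs, H0 in Hs1 by lra.
  replace (0 * r ^ n * (1 + eps r) - 1) with (-1) in Hs1 by ring.
  replace (Rabs (-1)) with 1 in Hs1 by (rewrite Rabs_left; lra).
  pose proof (Rle_abs C). pose proof (exp_pos (- a * r)). nra. Qed.

Lemma INR_n_ge1 n : (1 <= n)%nat -> 1 <= INR n.
Proof. intros H. replace 1 with (INR 1) by reflexivity. apply le_INR; auto. Qed.

Lemma Dg_eq n beta s z r : NO_profile n beta s z -> 0 < r -> Derive (gfun z) r = ffun z r / r * s r ^ 2.
Proof. intros H Hr. rewrite (is_derive_unique _ _ _ (g_deriv n beta s z r H Hr)). unfold ffun. field. lra. Qed.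

Lemma Df_eq n beta s z r : NO_profile n beta s z -> 0 < r -> Derive (ffun z) r = r * gfun z r.
Proof. intros H Hr. apply is_derive_unique. apply (f_deriv n beta s z r H Hr). Qed.

Lemma f_nonneg n beta s z : (1 <= n)%nat -> NO_profile n beta s z ->
  forall r, 0 < r -> 0 <= ffun z r.
Proof.
intros Hn HNO r1 Hr1. apply Rnot_lt_le; intro Hneg.
pose proof (INR_n_ge1 n Hn) as Hn1.
destruct (proj1 (lim0r_eps _ _) (f_lim0 n beta s z HNO) (INR n / 2)) as [d [Hd Hd2]]. lra.
set (e0 := Rmin d r1 / 2).
assert (He0 : 0 < e0 < r1). { unfold e0. pose proof (Rmin_r d r1). assert (0 < Rmin d r1) by (apply Rmin_pos; lra). lra. }
assert (Hfe0 : 0 < ffun z e0).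
{ assert (e0 < d). unfold e0. pose proof (Rmin_l d r1). assert (0 < Rmin d r1) by (apply Rmin_pos; lra). lra.
  specialize (Hd2 e0 (conj (proj1 He0) H)). apply Rabs_lt_between in Hd2. lra. }
destruct (f_liminf n beta s z HNO (- ffun z r1 / 2)) as [R0 [HR0 HR0']]. lra.
set (R := Rmax R0 r1 + 1).
assert (HR : r1 < R /\ R0 < R). { unfold R. pose proof (Rmax_l R0 r1). pose proof (Rmax_r R0 r1). lra. }
assert (HfR : ffun z r1 / 2 < ffun z R). { specialize (HR0' R (proj2 HR)). apply Rabs_lt_between in HR0'. lra. }
assert (Hcont : forall c, e0 <= c <= R -> continuity_pt (ffun z) c).
{ intros c Hc. apply cont_of_ex_derive. apply (f_exd n beta s z); [exact HNO | lra]. }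
destruct (continuity_ab_min (ffun z) e0 R) as [rs [Hmin Hrs]]. lra. auto.
assert (Hfrs : ffun z rs <= ffun z r1) by (apply Hmin; lra).
assert (Hrs2 : e0 < rs < R).
{ split. destruct (Req_dec rs e0) as [E|E]. rewrite E in Hfrs. lra. lra.
  destruct (Req_dec rs R) as [E|E]. rewrite E in Hfrs. lra. lra. }
assert (Hg0 : gfun z rs = 0).
{ assert (Derive (ffun z) rs = 0). apply (min_deriv0 _ e0 R). auto. intros; apply Hmin; lra.
  apply (f_exd n beta s z); [exact HNO | lra].
  rewrite Df_eq with (n:=n) (beta:=beta) (s:=s) in H by (auto; lra).
  apply Rmult_integral in H. destruct H; lra. }
destruct (first_cross (ffun z) rs R (ffun z rs / 2)) as [t [Ht [Hft Hlt]]]. lra.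
{ intros; apply Hcont; lra. } lra. lra.
assert (Hle : forall tau, rs <= tau <= t -> ffun z tau <= ffun z rs / 2).
{ intros tau Htau. destruct (Req_dec tau t) as [->|E]. lra. apply Rlt_le, Hlt. lra. }
assert (Hgle : forall tau, rs <= tau <= t -> gfun z tau <= 0).
{ intros tau Htau. rewrite <- Hg0. apply nonincr. lra. intros x Hx. split. apply (g_exd n beta s z); [exact HNO | lra].
  rewrite (Dg_eq n beta s z) by (auto; lra).
  assert (ffun z x <= 0) by (pose proof (Hle x ltac:(lra)); lra).
  assert (ffun z x / x <= 0). { unfold Rdiv. assert (0 < / x) by (apply Rinv_0_lt_compat; lra). nra. }
  pose proof (pow2_ge_0 (s x)). nra. }
assert (ffun z t <= ffun z rs).
{ apply nonincr. lra. intros x Hx. split. apply (f_exd n beta s z); [exact HNO | lra].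
  rewrite (Df_eq n beta s z) by (auto; lra). pose proof (Hgle x Hx). nra. }
lra.
Qed.

Lemma g_nonpos n beta s z : (1 <= n)%nat -> NO_profile n beta s z ->
  forall r, 0 < r -> gfun z r <= 0.
Proof.
intros Hn HNO r1 Hr1. apply Rnot_lt_le; intro Hpos.
assert (Hg : forall r, r1 <= r -> gfun z r1 <= gfun z r).
{ intros r Hr. apply nondecr; auto. intros x Hx. split. apply (g_exd n beta s z); [exact HNO | lra].
  rewrite (Dg_eq n beta s z) by (auto; lra).
  pose proof (f_nonneg n beta s z Hn HNO x ltac:(lra)).
  assert (0 <= ffun z x / x). { unfold Rdiv. assert (0 < / x) by (apply Rinv_0_lt_compat; lra). nra. }
  pose proof (pow2_ge_0 (s x)). nra. }
set (c := r1 * gfun z r1).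
assert (Hc : 0 < c) by (unfold c; nra).
assert (Hf : forall r, r1 <= r -> ffun z r1 - c * r1 <= ffun z r - c * r).
{ intros r Hr. apply (nondecr (fun t => ffun z t - c * t)); auto. intros x Hx.
  assert (ex_derive (ffun z) x) by (apply (f_exd n beta s z); [exact HNO | lra]).
  split. auto_derive. auto.
  rewrite Derive_minus; auto. rewrite Derive_scal, Derive_id, (Df_eq n beta s z) by (auto; lra).
  unfold c. pose proof (Hg x (proj1 Hx)). nra. auto_derive; auto. }
destruct (f_liminf n beta s z HNO 1) as [R0 [HR0 HR0']]. lra.
set (r := Rmax R0 r1 + 1 + / c).
assert (Hr : R0 < r /\ r1 < r).
{ unfold r. pose proof (Rmax_l R0 r1). pose proof (Rmax_r R0 r1). pose proof (Rinv_0_lt_compat c Hc). lra. }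
specialize (HR0' r (proj1 Hr)). apply Rabs_lt_between in HR0'.
specialize (Hf r (Rlt_le _ _ (proj2 Hr))).
pose proof (f_nonneg n beta s z Hn HNO r1 Hr1).
assert (c * (r - r1) > 1).
{ assert (r - r1 >= 1 + / c). unfold r. pose proof (Rmax_r R0 r1). lra.
  assert (c * (1 + / c) = c + 1) by (field; lra). nra. }
lra.
Qed.

Lemma f_mono n beta s z : (1 <= n)%nat -> NO_profile n beta s z ->
  forall a b, 0 < a <= b -> ffun z b <= ffun z a.
Proof. intros Hn HNO a b Hab. apply nonincr. lra. intros x Hx. split.
  apply (f_exd n beta s z); [exact HNO | lra].
  rewrite (Df_eq n beta s z) by (auto; lra). pose proof (g_nonpos n beta s z Hn HNO x ltac:(lra)). nra. Qed.

Lemma f_le_n n beta s z : (1 <= n)%nat -> NO_profile n beta s z ->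
  forall r, 0 < r -> ffun z r <= INR n.
Proof. intros Hn HNO r Hr. apply (lim0r_ge (ffun z) (INR n) (ffun z r) r).
  apply (f_lim0 n beta s z HNO). auto. intros a Ha. apply (f_mono n beta s z); auto; lra. Qed.

Lemma s_nz_near0 n beta s z : NO_profile n beta s z -> exists rho, 0 < rho /\
  forall r, 0 < r < rho -> s r <> 0.
Proof. intros HNO. destruct (s_facts n beta s z HNO) as [s0 [eps [He [Hs Hs0]]]].
  destruct (proj1 (lim0r_eps _ _) He (1/2)) as [d [Hd Hd2]]. lra.
  exists d. split; auto. intros r Hr. rewrite Hs by lra. specialize (Hd2 r Hr).
  apply Rabs_lt_between in Hd2.
  apply Rmult_integral_contrapositive. split. apply Rmult_integral_contrapositive. split; auto.
  apply pow_nonzero; lra. lra. Qed.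

Lemma f_strict n beta s z : (1 <= n)%nat -> NO_profile n beta s z ->
  exists dl r1, 0 < dl /\ 0 < r1 /\ (forall r, 0 < r <= r1 -> ffun z r <= INR n - dl * r ^ 2) /\
  (forall r, 0 < r -> ffun z r < INR n).
Proof.
intros Hn HNO. pose proof (INR_n_ge1 n Hn) as Hn1.
destruct (s_nz_near0 n beta s z HNO) as [d1 [Hd1 Hs]].
destruct (proj1 (lim0r_eps _ _) (f_lim0 n beta s z HNO) (INR n / 2)) as [d2 [Hd2 Hf2]]. lra.
set (rho := Rmin d1 d2).
assert (Hrho : 0 < rho /\ rho <= d1 /\ rho <= d2). { unfold rho. split. apply Rmin_pos; lra. split. apply Rmin_l. apply Rmin_r. }
set (r1 := rho / 2).
assert (Hlt : gfun z r1 < gfun z (3 * rho / 4)).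
{ apply strict_incr. unfold r1; lra. intros x Hx. split. apply (g_exd n beta s z); [exact HNO | unfold r1 in Hx; lra].
  assert (Hx0 : 0 < x) by (unfold r1 in Hx; lra).
  rewrite (Dg_eq n beta s z) by (auto; lra).
  assert (Hfx : INR n / 2 < ffun z x). { specialize (Hf2 x ltac:(unfold r1 in Hx; lra)). apply Rabs_lt_between in Hf2. lra. }
  assert (0 < ffun z x / x). { apply Rdiv_lt_0_compat; lra. }
  assert (s x <> 0) by (apply Hs; unfold r1 in Hx; lra).
  assert (0 < s x ^ 2). { apply pow2_gt_0; auto. } nra. }
pose proof (g_nonpos n beta s z Hn HNO (3 * rho / 4) ltac:(lra)).
set (dl0 := - gfun z r1).
assert (Hdl0 : 0 < dl0) by (unfold dl0; lra).
assert (Hg : forall t, 0 < t <= r1 -> gfun z t <= - dl0).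
{ intros t Ht. unfold dl0. rewrite Ropp_involutive. apply nondecr. lra. intros x Hx. split.
  apply (g_exd n beta s z); [exact HNO | lra]. rewrite (Dg_eq n beta s z) by (auto; lra).
  pose proof (f_nonneg n beta s z Hn HNO x ltac:(lra)).
  assert (0 <= ffun z x / x). { unfold Rdiv. assert (0 < / x) by (apply Rinv_0_lt_compat; lra). nra. }
  pose proof (pow2_ge_0 (s x)). nra. }
assert (Hb : forall r, 0 < r <= r1 -> ffun z r <= INR n - dl0 / 2 * r ^ 2).
{ intros r Hr.
  assert (L : lim0r (fun t => ffun z t + dl0 / 2 * t ^ 2) (INR n + dl0 / 2 * 0 ^ 2)).
  { apply lim0r_plus. apply (f_lim0 n beta s z HNO). apply lim0r_mult. apply lim0r_const.
    simpl. apply lim0r_mult. apply lim0r_id. apply lim0r_mult. apply lim0r_id. apply lim0r_const. }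
  replace (INR n + dl0 / 2 * 0 ^ 2) with (INR n) in L by ring.
  assert (ffun z r + dl0 / 2 * r ^ 2 <= INR n). 2: lra.
  apply (lim0r_ge _ _ _ r L). lra. intros a Ha.
  apply (nonincr (fun t => ffun z t + dl0 / 2 * t ^ 2)). lra. intros x Hx.
  assert (ex_derive (ffun z) x) by (apply (f_exd n beta s z); [exact HNO | lra]).
  split. auto_derive; auto.
  replace (Derive (fun t => ffun z t + dl0 / 2 * t ^ 2) x) with (x * gfun z x + dl0 * x).
  pose proof (Hg x ltac:(lra)). nra.
  symmetry. apply is_derive_unique. rewrite <- (Df_eq n beta s z) by (auto; lra).
  auto_derive; auto. change (Derive (fun x => ffun z x) x) with (Derive (ffun z) x). field. }
exists (dl0 / 2), r1. split. lra. split. unfold r1; lra. split. auto.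
intros r Hr. destruct (Rle_lt_dec r r1).
{ specialize (Hb r (conj Hr r0)). assert (0 < dl0 / 2 * r ^ 2) by (apply Rmult_lt_0_compat; [lra | apply pow_lt; lra]). lra. }
{ pose proof (f_mono n beta s z Hn HNO r1 r ltac:(unfold r1 in *; lra)).
  specialize (Hb r1 ltac:(unfold r1; lra)). assert (0 < dl0 / 2 * r1 ^ 2) by (apply Rmult_lt_0_compat; [lra | apply pow_lt; unfold r1; lra]). lra. }
Qed.

Lemma alg (g K r V0 V1 V2 U0 U1 S0 S1 Z0 Z1 Z2 : R) : 0 < r -> 0 < g ->
  let Y0 := g * Z0 - K / (2 * r) in
  let Y1 := g * Z1 + K / (2 * r ^ 2) in
  let Y2 := g * Z2 - K / r ^ 3 in
  let X0 := (g - 1) * Z0 - K / (2 * r) in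
  V2 + V1 / r - V0 / r ^ 2 + 2 * (2 * Y1 * U0 + Y0 * U1 + Y0 * U0 / r) - g * V0 * S0 ^ 2 = 0 ->
  V1 * Y0 - V0 * Y1 + (2 * Y0 ^ 2 + g / 2 * S0 ^ 2) * U0 = 0 ->
  V2 * Y0 - V0 * Y2 + (4 * Y0 * Y1 + g * S0 * S1) * U0 + (2 * Y0 ^ 2 + g / 2 * S0 ^ 2) * U1 = 0 ->
  Z2 + Z1 / r - Z0 / r ^ 2 - Z0 * S0 ^ 2 = 0 ->
  S0 ^ 2 * X0 * V0 + (S0 ^ 2 * U0 + 2 * r * S0 * S1 * U0 + r * S0 ^ 2 * U1) / (2 * r) = 0.
Proof. intros Hr Hg Y0 Y1 Y2 X0 E1 E2 E3 EZ.
  assert (H : Y0 * (V2 + V1 / r - V0 / r ^ 2 + 2 * (2 * Y1 * U0 + Y0 * U1 + Y0 * U0 / r) - g * V0 * S0 ^ 2)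
    - (V2 * Y0 - V0 * Y2 + (4 * Y0 * Y1 + g * S0 * S1) * U0 + (2 * Y0 ^ 2 + g / 2 * S0 ^ 2) * U1)
    - (V1 * Y0 - V0 * Y1 + (2 * Y0 ^ 2 + g / 2 * S0 ^ 2) * U0) / r
    - g * V0 * (Z2 + Z1 / r - Z0 / r ^ 2 - Z0 * S0 ^ 2)
    = - g * (S0 ^ 2 * X0 * V0 + (S0 ^ 2 * U0 + 2 * r * S0 * S1 * U0 + r * S0 ^ 2 * U1) / (2 * r))).
  { unfold Y0, Y1, Y2, X0. field. lra. }
  rewrite E1, E2, E3, EZ in H.
  assert (- g * (S0 ^ 2 * X0 * V0 + (S0 ^ 2 * U0 + 2 * r * S0 * S1 * U0 + r * S0 ^ 2 * U1) / (2 * r)) = 0) by (rewrite <- H; field; lra).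
  apply Rmult_integral in H0. destruct H0; auto. lra. Qed.

Lemma eq_ii gamma n m beta s z u v r : 0 < gamma -> NO_profile n beta s z ->
  W_perturbation gamma n m s z u v -> 0 < r ->
  s r ^ 2 * xfun gamma n m z r * v r +
  (s r ^ 2 * u r + 2 * r * s r * Derive s r * u r + r * s r ^ 2 * Derive u r) / (2 * r) = 0.
Proof.
intros Hg HNO HW Hr.
destruct HNO as [HD [_ [HZ _]]]. destruct HW as [HWD [HE1 [HE2 _]]].
set (y := yfun gamma n m z).
assert (Hzd : forall t, 0 < t -> ex_derive z t) by (intros t Ht; apply (HD t Ht)).
destruct (HD r Hr) as [Hs1 [Hs2 [Hz1 Hz2]]]. destruct (HWD r Hr) as [Hu1 [Hv1 Hv2]].
assert (Hy1 : ex_derive y r) by (apply ex_Dy; auto).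
assert (Hy2 : ex_derive (Derive y) r) by (eexists; apply DDy; auto).
set (E2f := fun t => Derive v t * y t - v t * Derive y t + (2 * y t ^ 2 + gamma / 2 * s t ^ 2) * u t).
assert (HE2d : Derive E2f r = 0). { apply Derive0_loc; auto. }
assert (HE2d' : is_derive E2f r (Derive (Derive v) r * y r - v r * Derive (Derive y) r
   + (4 * y r * Derive y r + gamma * s r * Derive s r) * u r + (2 * y r ^ 2 + gamma / 2 * s r ^ 2) * Derive u r)).
{ unfold E2f. auto_derive. repeat split; auto.
  change (Derive (fun x => Derive v x) r) with (Derive (Derive v) r).
  change (Derive (fun x => y x) r) with (Derive y r).
  change (Derive (fun x => v x) r) with (Derive v r).
  change (Derive (fun x => Derive y x) r) with (Derive (Derive y) r).
  change (Derive (fun x => s x) r) with (Derive s r).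
  change (Derive (fun x => u x) r) with (Derive u r). rewrite ?Rmult_1_l, ?Rmult_1_r. field. }
rewrite (is_derive_unique _ _ _ HE2d') in HE2d.
specialize (HE1 r Hr). specialize (HE2 r Hr). specialize (HZ r Hr).
unfold y in HE1, HE2, HE2d.
rewrite (is_derive_unique _ _ _ (DDy gamma n m z r Hr Hzd Hz2)) in HE2d.
rewrite Dy in HE1, HE2, HE2d by auto.
unfold yfun in HE1, HE2, HE2d. unfold xfun.
apply (alg gamma (2 * gamma * INR n + IZR m) r (v r) (Derive v r) (Derive (Derive v) r) (u r) (Derive u r)
   (s r) (Derive s r) (z r) (Derive z r) (Derive (Derive z) r)); auto.
all: first [ rewrite <- HE1; field; lra | rewrite <- HE2; field; lra | rewrite <- HE2d; field; lra | idtac ].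
Qed.

Lemma lim0r_unique f a b : lim0r f a -> lim0r f b -> a = b.
Proof. intros Ha Hb. destruct (Req_dec a b) as [E|E]; auto. exfalso.
  assert (He : 0 < Rabs (a - b) / 2). { apply Rdiv_lt_0_compat. apply Rabs_pos_lt. lra. lra. }
  destruct (proj1 (lim0r_eps _ _) Ha _ He) as [d1 [Hd1 H1]].
  destruct (proj1 (lim0r_eps _ _) Hb _ He) as [d2 [Hd2 H2]].
  set (t := Rmin d1 d2 / 2). assert (0 < Rmin d1 d2) by (apply Rmin_pos; lra).
  pose proof (Rmin_l d1 d2). pose proof (Rmin_r d1 d2).
  specialize (H1 t ltac:(unfold t; split; lra)). specialize (H2 t ltac:(unfold t; split; lra)).
  pose proof (Rabs_triang (a - f t) (f t - b)) as HT. replace (a - f t + (f t - b)) with (a - b) in HT by ring.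
  rewrite Rabs_minus_sym in H1. lra. Qed.

Lemma lim0r_pow_aux n : lim0r (fun t => t ^ n) (0 ^ n).
Proof. induction n. simpl. apply lim0r_const. simpl. apply lim0r_mult. apply lim0r_id. auto. Qed.

Lemma lim0r_bmult f g M d : lim0r f 0 -> 0 < d -> (forall t, 0 < t < d -> Rabs (g t) <= M) ->
  lim0r (fun t => f t * g t) 0.
Proof. intros Hf Hd Hg. apply lim0r_eps. intros e He.
  destruct (proj1 (lim0r_eps _ _) Hf (e / (Rabs M + 1))) as [d1 [Hd1 H1]].
  apply Rdiv_lt_0_compat; auto. pose proof (Rabs_pos M); lra.
  exists (Rmin d d1). split. apply Rmin_pos; lra. intros t Ht.
  pose proof (Rmin_l d d1). pose proof (Rmin_r d d1).
  specialize (H1 t ltac:(split; lra)). specialize (Hg t ltac:(split; lra)). rewrite Rminus_0_r in *.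
  rewrite Rabs_mult. pose proof (Rabs_pos M). pose proof (Rle_abs M).
  assert (Rabs (f t) * Rabs (g t) <= Rabs (f t) * (Rabs M + 1)). { apply Rmult_le_compat_l. apply Rabs_pos. lra. }
  assert (Rabs (f t) * (Rabs M + 1) < e). { apply Rmult_lt_reg_r with (/ (Rabs M + 1)). apply Rinv_0_lt_compat; lra.
    rewrite Rmult_assoc, Rinv_r by lra. rewrite Rmult_1_r. exact H1. }
  lra. Qed.

Lemma Rpower_add1 t k : 0 < t -> Rpower t (k + 1) = Rpower t k * t.
Proof. intros. rewrite Rpower_plus, Rpower_1; auto. Qed.

Lemma Rpower_addn t k n : 0 < t -> Rpower t (INR n + k) = t ^ n * Rpower t k.
Proof. intros. rewrite Rpower_plus, Rpower_pow; auto. Qed.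

Lemma Y_eq gamma n m z t : 0 < t ->
  t * yfun gamma n m z t = gamma * ffun z t - (2 * gamma * INR n + IZR m) / 2.
Proof. intros. unfold yfun, ffun. field. lra. Qed.

Lemma X_eq gamma n m z t : 0 < t ->
  t * xfun gamma n m z t = (gamma - 1) * ffun z t - (2 * gamma * INR n + IZR m) / 2.
Proof. intros. unfold xfun, ffun. field. lra. Qed.
Lemma lim0r_pow n : lim0r (fun t => t ^ n) (0 ^ n).
Proof. apply lim0r_pow_aux. Qed.
Lemma lim0r_pow' n f l : lim0r f l -> lim0r (fun t => f t ^ n) (l ^ n).
Proof. intros H. induction n. simpl. apply lim0r_const. simpl. apply lim0r_mult; auto. Qed.

Lemma s_lim0 n beta s z : (1 <= n)%nat -> NO_profile n beta s z -> lim0r s 0.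
Proof. intros Hn HNO. destruct (s_facts n beta s z HNO) as [s0 [es [He [Hs _]]]].
  apply (lim0r_ext (fun t => s0 * t ^ n * (1 + es t)) _ _ 1). lra. intros; rewrite Hs; auto; lra.
  assert (L : lim0r (fun t => s0 * t ^ n * (1 + es t)) (s0 * 0 ^ n * (1 + 0))).
  { apply lim0r_mult. apply lim0r_mult. apply lim0r_const. apply lim0r_pow. apply lim0r_plus. apply lim0r_const. auto. }
  replace (s0 * 0 ^ n * (1 + 0)) with 0 in L. auto. destruct n. lia. simpl. ring. Qed.

Lemma f_lim_Y gamma n m beta s z : NO_profile n beta s z ->
  lim0r (fun t => t * yfun gamma n m z t) (gamma * INR n - (2 * gamma * INR n + IZR m) / 2).
Proof. intros HNO. apply (lim0r_ext (fun t => gamma * ffun z t - (2 * gamma * INR n + IZR m) / 2) _ _ 1). lra.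
  intros t Ht. rewrite Y_eq; auto; lra.
  apply lim0r_minus. apply lim0r_mult. apply lim0r_const. apply (f_lim0 n beta s z HNO). apply lim0r_const. Qed.

Lemma f_lim_X gamma n m beta s z : NO_profile n beta s z ->
  lim0r (fun t => t * xfun gamma n m z t) ((gamma - 1) * INR n - (2 * gamma * INR n + IZR m) / 2).
Proof. intros HNO. apply (lim0r_ext (fun t => (gamma - 1) * ffun z t - (2 * gamma * INR n + IZR m) / 2) _ _ 1). lra.
  intros t Ht. rewrite X_eq; auto; lra.
  apply lim0r_minus. apply lim0r_mult. apply lim0r_const. apply (f_lim0 n beta s z HNO). apply lim0r_const. Qed.

Lemma Rpow_big t n k : 0 < t -> Rpower t (2 * INR n + k + 1) = t ^ (2 * n) * Rpower t k * t.
Proof. intros Ht. rewrite Rpower_add1 by auto. rewrite <- Rpower_addn by auto. rewrite mult_INR. simpl (INR 2). reflexivity. Qed.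

Lemma Rpow_big' t n k : 0 < t -> Rpower t (2 * INR n + k + 1 - 1) = t ^ (2 * n) * Rpower t k.
Proof. intros Ht. replace (2 * INR n + k + 1 - 1) with (INR (2 * n) + k). apply Rpower_addn; auto.
  rewrite mult_INR. simpl (INR 2). ring. Qed.

Lemma indicial gamma n m beta s z u v k u0 v0 eu ev :
  (1 <= n)%nat -> 0 < gamma -> NO_profile n beta s z -> W_perturbation gamma n m s z u v ->
  -1/2 < k -> lim0r eu 0 -> lim0r ev 0 ->
  (forall r, 0 < r -> u r = u0 * Rpower r k * (1 + eu r) /\ v r = v0 * Rpower r k * (1 + ev r)) ->
  -2 * INR n <= IZR m <= -1 -> u0 = 0 /\ v0 = 0.
Proof.
intros Hn Hg HNO HW Hk Heu Hev Huv Hm.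
pose proof HNO as HNO0. pose proof HW as HW0.
pose proof (INR_n_ge1 n Hn) as Hn1.
set (K := 2 * gamma * INR n + IZR m).
set (al := gamma * INR n - K / 2).
assert (Hal : al = - IZR m / 2) by (unfold al, K; field).
assert (Hal0 : al <> 0) by lra.
set (be := (gamma - 1) * INR n - K / 2).
assert (Hbe : be = - (INR n + IZR m / 2)) by (unfold be, K; field).
set (y := yfun gamma n m z). set (x := xfun gamma n m z).
assert (LY : lim0r (fun t => t * y t) al) by apply (f_lim_Y gamma n m beta s z HNO).
assert (LX : lim0r (fun t => t * x t) be) by apply (f_lim_X gamma n m beta s z HNO).
destruct (proj1 (lim0r_eps _ _) LY (Rabs al / 2)) as [d0 [Hd0 HY]].
{ apply Rdiv_lt_0_compat. apply Rabs_pos_lt; auto. lra. }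
assert (HYnz : forall t, 0 < t < d0 -> t * y t <> 0).
{ intros t Ht. specialize (HY t Ht). intro E. rewrite E in HY.
  replace (0 - al) with (- al) in HY by ring. rewrite Rabs_Ropp in HY. pose proof (Rabs_pos al). lra. }
assert (Hynz : forall t, 0 < t < d0 -> y t <> 0).
{ intros t Ht E. apply (HYnz t Ht). rewrite E. ring. }
destruct (s_facts n beta s z HNO) as [s0 [es [Hes [Hs Hs0]]]].
pose proof (s_lim0 n beta s z Hn HNO) as Ls.
destruct HNO as [HD HNO']. 
destruct HW as [HWD [HE1 [HE2 HWrest]]].
assert (HDall : forall t, 0 < t -> ex_derive s t /\ ex_derive z t /\ ex_derive u t /\ ex_derive v t /\ ex_derive y t).
{ intros t Ht. destruct (HD t Ht) as [h1 [_ [h3 _]]]. destruct (HWD t Ht) as [h4 [h5 _]].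
  repeat split; auto. apply ex_Dy; auto. }
set (F1 := fun t => v t / y t). set (G1 := fun t => Rpower t (k + 1)).
assert (HDF1 : forall t, 0 < t < d0 -> Derive F1 t = - (2 * y t ^ 2 + gamma / 2 * s t ^ 2) * u t / y t ^ 2).
{ intros t Ht. destruct (HDall t ltac:(lra)) as [_ [_ [_ [h1 h2]]]]. pose proof (Hynz t Ht).
  apply is_derive_unique. unfold F1. auto_derive. repeat split; auto.
  change (Derive (fun x => v x) t) with (Derive v t). change (Derive (fun x => y x) t) with (Derive y t).
  specialize (HE2 t ltac:(lra)). fold y in HE2.
  apply Rmult_eq_reg_r with (y t ^ 2). 2: apply pow_nonzero; auto.
  field_simplify; auto. replace (- y t ^ 2 * 2 * u t - u t * gamma / 2 * s t ^ 2) with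
    (- (2 * y t ^ 2 + gamma / 2 * s t ^ 2) * u t) by field. lra. }
assert (HDG1 : forall t, 0 < t -> Derive G1 t = (k + 1) * Rpower t k).
{ intros t Ht. apply is_derive_unique. unfold G1.
  replace ((k+1) * Rpower t k) with ((k+1) * Rpower t (k+1-1)) by (f_equal; f_equal; ring).
  apply Derive_Rpower; auto. }
assert (L1a : lim0r (fun t => F1 t / G1 t) (v0 * (1 + 0) * / al)).
{ apply (lim0r_ext (fun t => v0 * (1 + ev t) * / (t * y t)) _ _ d0); auto.
  intros t Ht. unfold F1, G1. rewrite (proj2 (Huv t ltac:(lra))). rewrite Rpower_add1 by lra.
  pose proof (Rpower_pos' t k). pose proof (Hynz t Ht). field. repeat split; lra.
  apply lim0r_mult. apply lim0r_mult. apply lim0r_const. apply lim0r_plus. apply lim0r_const. auto.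
  apply lim0r_inv; auto. }
assert (L1b : lim0r (fun t => F1 t / G1 t)
   (- (2 + gamma / 2 * (0 * 0) ^ 2 * / al ^ 2) * (u0 * (1 + 0)) * / (k + 1))).
{ apply (lhop F1 G1 _ d0); auto.
  - intros t Ht. destruct (HDall t ltac:(lra)) as [_ [_ [_ [h1 h2]]]]. pose proof (Hynz t Ht).
    split. unfold F1. auto_derive. auto. split. eexists. apply Derive_Rpower. lra.
    rewrite HDG1 by lra. pose proof (Rpower_pos' t k). split. apply Rgt_not_eq, Rmult_lt_0_compat; lra.
    unfold G1. apply Rgt_not_eq, Rpower_pos'.
  - apply (lim0r_ext (fun t => v0 * (1 + ev t) * Rpower t (k + 1) * / (t * y t)) _ _ d0); auto.
    intros t Ht. unfold F1. rewrite (proj2 (Huv t ltac:(lra))). rewrite Rpower_add1 by lra.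
    pose proof (Rpower_pos' t k). pose proof (Hynz t Ht). field. repeat split; lra.
    replace 0 with (v0 * (1 + 0) * 0 * / al) by ring.
    apply lim0r_mult. apply lim0r_mult. apply lim0r_mult. apply lim0r_const. apply lim0r_plus. apply lim0r_const. auto.
    apply lim0r_Rpower. lra. apply lim0r_inv; auto.
  - apply lim0r_Rpower. lra.
  - apply (lim0r_ext (fun t => - (2 + gamma / 2 * (t * s t) ^ 2 * / (t * y t) ^ 2) * (u0 * (1 + eu t)) * / (k + 1)) _ _ d0); auto.
    intros t Ht. rewrite HDF1, HDG1 by lra. rewrite (proj1 (Huv t ltac:(lra))).
    pose proof (Rpower_pos' t k). pose proof (Hynz t Ht). field. repeat split; lra.
    apply lim0r_mult. apply lim0r_mult. apply lim0r_opp. apply lim0r_plus. apply lim0r_const.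
    apply lim0r_mult. apply lim0r_mult. apply lim0r_const. apply (lim0r_pow' 2). apply lim0r_mult. apply lim0r_id. auto.
    apply lim0r_inv. apply pow_nonzero; auto. apply (lim0r_pow' 2). auto.
    apply lim0r_mult. apply lim0r_const. apply lim0r_plus. apply lim0r_const. auto. apply lim0r_const. }
pose proof (lim0r_unique _ _ _ L1a L1b) as R1.
set (F2 := fun t => t * s t ^ 2 * u t). set (G2 := fun t => Rpower t (2 * INR n + k + 1)).
assert (HkN : 0 < 2 * INR n + k + 1) by lra.
assert (HDF2 : forall t, 0 < t -> Derive F2 t = -2 * t * s t ^ 2 * x t * v t).
{ intros t Ht. destruct (HDall t Ht) as [h1 [_ [h3 _]]].
  pose proof (eq_ii gamma n m beta s z u v t Hg HNO0 HW0 Ht) as Hii. fold x in Hii.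
  apply is_derive_unique. unfold F2. auto_derive. repeat split; auto.
  change (Derive (fun x => s x) t) with (Derive s t). change (Derive (fun x => u x) t) with (Derive u t).
  assert (HS : (s t ^ 2 * u t + 2 * t * s t * Derive s t * u t + t * s t ^ 2 * Derive u t) / (2 * t) = - (s t ^ 2 * x t * v t)) by lra.
  transitivity (2 * t * ((s t ^ 2 * u t + 2 * t * s t * Derive s t * u t + t * s t ^ 2 * Derive u t) / (2 * t))).
  field; lra. rewrite HS; ring. }
assert (HDG2 : forall t, 0 < t -> Derive G2 t = (2 * INR n + k + 1) * (t ^ (2 * n) * Rpower t k)).
{ intros t Ht. apply is_derive_unique. unfold G2. rewrite <- Rpow_big' by auto.
  apply Derive_Rpower; auto. }
assert (Hp2 : forall t, t ^ (2 * n) = (t ^ n) ^ 2).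
{ intros t. rewrite <- pow_mult. f_equal. lia. }
assert (L2a : lim0r (fun t => F2 t / G2 t) ((s0 * (1 + 0)) ^ 2 * (u0 * (1 + 0)))).
{ apply (lim0r_ext (fun t => (s0 * (1 + es t)) ^ 2 * (u0 * (1 + eu t))) _ _ 1). lra.
  intros t Ht. unfold F2, G2. rewrite (proj1 (Huv t ltac:(lra))), Hs, Rpow_big, Hp2 by lra.
  pose proof (Rpower_pos' t k). assert (0 < t ^ n) by (apply pow_lt; lra). field. repeat split; lra.
  apply lim0r_mult. apply lim0r_pow'. apply lim0r_mult. apply lim0r_const. apply lim0r_plus. apply lim0r_const. auto.
  apply lim0r_mult. apply lim0r_const. apply lim0r_plus. apply lim0r_const. auto. }
assert (L2b : lim0r (fun t => F2 t / G2 t)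
   (-2 * (s0 * (1 + 0)) ^ 2 * be * (v0 * (1 + 0)) * / (2 * INR n + k + 1))).
{ apply (lhop F2 G2 _ 1). lra.
  - intros t Ht. destruct (HDall t ltac:(lra)) as [h1 [_ [h3 _]]].
    split. unfold F2. auto_derive. auto. split. eexists. apply Derive_Rpower. lra.
    rewrite HDG2 by lra. pose proof (Rpower_pos' t k). assert (0 < t ^ (2 * n)) by (apply pow_lt; lra).
    split. apply Rgt_not_eq. apply Rmult_lt_0_compat. lra. apply Rmult_lt_0_compat; lra.
    unfold G2. apply Rgt_not_eq, Rpower_pos'.
  - apply (lim0r_ext (fun t => (s0 * (1 + es t)) ^ 2 * (u0 * (1 + eu t)) * Rpower t (2 * INR n + k + 1)) _ _ 1). lra.
    intros t Ht. unfold F2. rewrite (proj1 (Huv t ltac:(lra))), Hs, Rpow_big, Hp2 by lra. ring.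
    replace 0 with ((s0 * (1 + 0)) ^ 2 * (u0 * (1 + 0)) * 0) by ring.
    apply lim0r_mult. apply lim0r_mult. apply lim0r_pow'. apply lim0r_mult. apply lim0r_const. apply lim0r_plus. apply lim0r_const. auto.
    apply lim0r_mult. apply lim0r_const. apply lim0r_plus. apply lim0r_const. auto.
    apply lim0r_Rpower. lra.
  - apply lim0r_Rpower. lra.
  - apply (lim0r_ext (fun t => -2 * (s0 * (1 + es t)) ^ 2 * (t * x t) * (v0 * (1 + ev t)) * / (2 * INR n + k + 1)) _ _ 1). lra.
    intros t Ht. rewrite HDF2, HDG2 by lra. rewrite (proj2 (Huv t ltac:(lra))), Hs, Hp2 by lra.
    pose proof (Rpower_pos' t k). assert (0 < t ^ n) by (apply pow_lt; lra). field. repeat split; lra.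
    apply lim0r_mult. apply lim0r_mult. apply lim0r_mult. apply lim0r_mult. apply lim0r_const.
    apply lim0r_pow'. apply lim0r_mult. apply lim0r_const. apply lim0r_plus. apply lim0r_const. auto.
    auto. apply lim0r_mult. apply lim0r_const. apply lim0r_plus. apply lim0r_const. auto. apply lim0r_const. }
pose proof (lim0r_unique _ _ _ L2a L2b) as R2.
assert (E1 : v0 * (k + 1) = -2 * al * u0).
{ apply (f_equal (fun w => w * (al * (k + 1)))) in R1.
  replace (v0 * (1 + 0) * / al * (al * (k + 1))) with (v0 * (k + 1)) in R1 by (field; auto).
  rewrite R1. field. split; lra. }
assert (E2 : u0 * (2 * INR n + k + 1) = -2 * be * v0).
{ apply (f_equal (fun w => w * ((2 * INR n + k + 1) * / s0 ^ 2))) in R2.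
  replace ((s0 * (1 + 0)) ^ 2 * (u0 * (1 + 0)) * ((2 * INR n + k + 1) * / s0 ^ 2)) with (u0 * (2 * INR n + k + 1)) in R2
    by (field; auto).
  rewrite R2. field. split; lra. }
rewrite Hal in E1. rewrite Hbe in E2.
assert (Hu0 : u0 = 0).
{ assert (E3 : u0 * ((k + 1) * (2 * INR n + k + 1) - IZR m * (2 * INR n + IZR m)) = 0).
  { replace (u0 * ((k + 1) * (2 * INR n + k + 1) - IZR m * (2 * INR n + IZR m))) with
      ((k + 1) * (u0 * (2 * INR n + k + 1)) - IZR m * (2 * INR n + IZR m) * u0) by ring.
    rewrite E2. replace (-2 * - (INR n + IZR m / 2) * v0) with ((2 * INR n + IZR m) * v0) by field.
    replace ((k + 1) * ((2 * INR n + IZR m) * v0)) with ((2 * INR n + IZR m) * (v0 * (k + 1))) by ring.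
    rewrite E1. field. }
  apply Rmult_integral in E3. destruct E3; auto. exfalso.
  assert (0 < (k + 1) * (2 * INR n + k + 1)) by (apply Rmult_lt_0_compat; lra).
  assert (IZR m * (2 * INR n + IZR m) <= 0) by nra. lra. }
split; auto. rewrite Hu0 in E1. assert (v0 * (k + 1) = 0) by lra.
apply Rmult_integral in H. destruct H; auto. lra.
Qed.

Lemma signs gamma n m beta s z : (1 <= n)%nat -> 0 < gamma <= 1 -> NO_profile n beta s z ->
  (IZR m = 0 \/ 1 <= IZR m \/ IZR m <= -2 * INR n - 1) ->
  (forall t, 0 < t -> t * yfun gamma n m z t <> 0 /\ 0 < (t * xfun gamma n m z t) / (t * yfun gamma n m z t)) /\
  (exists c, 0 < c /\ forall t, 1 <= t -> c <= Rabs (t * yfun gamma n m z t)) /\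
  (exists M d, 0 < d /\ forall t, 0 < t < d -> Rabs (t ^ 2 / (t * yfun gamma n m z t)) <= M).
Proof.
intros Hn Hg HNO Hm. pose proof (INR_n_ge1 n Hn) as Hn1.
pose proof (f_nonneg n beta s z Hn HNO) as Hf0. pose proof (f_le_n n beta s z Hn HNO) as Hfn.
assert (Hgen : (forall t, 0 < t -> 1/2 <= Rabs (t * yfun gamma n m z t)) ->
  (forall t, 0 < t -> t * yfun gamma n m z t <> 0 /\ 0 < (t * xfun gamma n m z t) / (t * yfun gamma n m z t)) ->
  (forall t, 0 < t -> t * yfun gamma n m z t <> 0 /\ 0 < (t * xfun gamma n m z t) / (t * yfun gamma n m z t)) /\
  (exists c, 0 < c /\ forall t, 1 <= t -> c <= Rabs (t * yfun gamma n m z t)) /\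
  (exists M d, 0 < d /\ forall t, 0 < t < d -> Rabs (t ^ 2 / (t * yfun gamma n m z t)) <= M)).
{ intros HY Hs. split; auto. split. exists (1/2). split. lra. intros; apply HY; lra.
  exists 2, 1. split. lra. intros t Ht. specialize (HY t (proj1 Ht)).
  unfold Rdiv. rewrite Rabs_mult, Rabs_inv. rewrite Rabs_pos_eq by (apply pow2_ge_0).
  assert (0 < Rabs (t * yfun gamma n m z t)) by lra.
  apply Rmult_le_reg_r with (Rabs (t * yfun gamma n m z t)); auto.
  rewrite Rmult_assoc, Rinv_l by lra. assert (t ^ 2 <= 1) by nra. nra. }
destruct Hm as [Hm | [Hm | Hm]].
-
  destruct (f_strict n beta s z Hn HNO) as [dl [r1 [Hdl [Hr1 [Hb Hlt]]]]].
  assert (HY : forall t, 0 < t -> t * yfun gamma n m z t = - gamma * (INR n - ffun z t)).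
  { intros t Ht. rewrite Y_eq by auto. rewrite Hm. field. }
  assert (HX : forall t, 0 < t -> t * xfun gamma n m z t = (gamma - 1) * ffun z t - gamma * INR n).
  { intros t Ht. rewrite X_eq by auto. rewrite Hm. field. }
  split.
  { intros t Ht. rewrite HY, HX by auto. specialize (Hlt t Ht). specialize (Hf0 t Ht).
    split. assert (0 < gamma * (INR n - ffun z t)) by (apply Rmult_lt_0_compat; lra). lra.
    assert (0 < gamma * (INR n - ffun z t)) by (apply Rmult_lt_0_compat; lra).
    replace ((gamma - 1) * ffun z t - gamma * INR n) with (- ((1 - gamma) * ffun z t + gamma * INR n)) by ring.
    replace (- gamma * (INR n - ffun z t)) with (- (gamma * (INR n - ffun z t))) by ring.
    unfold Rdiv. rewrite <- Ropp_inv_permute by lra. rewrite Rmult_opp_opp.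
    apply Rmult_lt_0_compat. assert (0 <= (1 - gamma) * ffun z t) by (apply Rmult_le_pos; lra). nra.
    apply Rinv_0_lt_compat; auto. }
  split.
  { exists (gamma * (INR n - ffun z 1)). split. apply Rmult_lt_0_compat. lra. specialize (Hlt 1). lra.
    intros t Ht. rewrite HY by lra. rewrite Rabs_left1.
    pose proof (f_mono n beta s z Hn HNO 1 t ltac:(lra)). nra.
    specialize (Hlt t ltac:(lra)). nra. }
  { exists (/ (gamma * dl)), r1. split; auto. intros t Ht.
    rewrite HY by lra. specialize (Hb t ltac:(lra)).
    assert (0 < gamma * dl * t ^ 2). { apply Rmult_lt_0_compat. nra. apply pow_lt; lra. }
    assert (gamma * dl * t ^ 2 <= gamma * (INR n - ffun z t)) by nra.
    unfold Rdiv. rewrite Rabs_mult, Rabs_inv, Rabs_pos_eq by (apply pow2_ge_0).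
    replace (Rabs (- gamma * (INR n - ffun z t))) with (gamma * (INR n - ffun z t)) by (rewrite Rabs_left1; [ring|nra]).
    apply Rmult_le_reg_r with (gamma * (INR n - ffun z t)). lra.
    rewrite Rmult_assoc, Rinv_l by lra.
    apply Rle_trans with (/ (gamma * dl) * (gamma * dl * t ^ 2)).
    right. field. split; lra. apply Rmult_le_compat_l. apply Rlt_le, Rinv_0_lt_compat. nra. auto. }
-
  apply Hgen.
  + intros t Ht. rewrite Y_eq by auto. specialize (Hfn t Ht). rewrite Rabs_left1. 2: nra.
    assert (gamma * ffun z t <= gamma * INR n) by nra. lra.
  + intros t Ht. rewrite Y_eq, X_eq by auto. specialize (Hfn t Ht). specialize (Hf0 t Ht).
    assert (gamma * ffun z t <= gamma * INR n) by nra.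
    split. lra. apply Rdiv_neg_neg. nra. lra.
-
  apply Hgen.
  + intros t Ht. rewrite Y_eq by auto. specialize (Hfn t Ht). specialize (Hf0 t Ht). rewrite Rabs_pos_eq.
    2: nra. assert (0 <= gamma * ffun z t) by nra. assert (gamma * INR n <= INR n) by nra. lra.
  + intros t Ht. rewrite Y_eq, X_eq by auto. specialize (Hfn t Ht). specialize (Hf0 t Ht).
    assert (0 <= gamma * ffun z t) by nra. assert (gamma * INR n <= INR n) by nra.
    assert ((1 - gamma) * ffun z t <= (1 - gamma) * INR n) by nra.
    split. lra. apply Rdiv_lt_0_compat; lra.
Qed.

Lemma Rpow_2n2k t n k : 0 < t -> Rpower t (2 * INR n + 2 * k) = (t ^ n) ^ 2 * Rpower t k ^ 2.
Proof. intros Ht. replace (2 * INR n + 2 * k) with (INR n + (INR n + (k + k))) by ring.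
  rewrite !Rpower_plus, !Rpower_pow by auto. ring. Qed.

Lemma Rpow_2p2 t p : 0 < t -> Rpower t (2 * p + 2) = t ^ 2 * Rpower t p ^ 2.
Proof. intros Ht. replace (2 * p + 2) with (p + (p + (1 + 1))) by ring.
  rewrite !Rpower_plus, !Rpower_1 by auto. ring. Qed.

Lemma Qcase gamma n m beta s z u v k u0 v0 eu ev :
  (1 <= n)%nat -> 0 < gamma <= 1 -> NO_profile n beta s z -> W_perturbation gamma n m s z u v ->
  -1/2 < k -> lim0r eu 0 -> lim0r ev 0 ->
  (forall r, 0 < r -> u r = u0 * Rpower r k * (1 + eu r) /\ v r = v0 * Rpower r k * (1 + ev r)) ->
  (IZR m = 0 \/ 1 <= IZR m \/ IZR m <= -2 * INR n - 1) -> u0 = 0 /\ v0 = 0.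
Proof.
intros Hn Hg HNO HW Hk Heu Hev Huv Hm.
pose proof HNO as HNO0. pose proof HW as HW0.
pose proof (INR_n_ge1 n Hn) as Hn1.
destruct (signs gamma n m beta s z Hn Hg HNO Hm) as [Hsg [[c [Hc HcY]] [M [d [Hd HM]]]]].
set (y := yfun gamma n m z) in *. set (x := xfun gamma n m z) in *.
assert (Hynz : forall t, 0 < t -> y t <> 0).
{ intros t Ht E. apply (proj1 (Hsg t Ht)). rewrite E. ring. }
assert (Hxy : forall t, 0 < t -> 0 < x t / y t).
{ intros t Ht. destruct (Hsg t Ht) as [_ H]. replace (x t / y t) with (t * x t / (t * y t)); auto.
  field. split; auto. lra. }
destruct (s_facts n beta s z HNO) as [s0 [es [Hes [Hs Hs0]]]].
destruct HNO as [HD [_ [_ [_ [_ [Cs [a [Rs [Ha HCs]]]]]]]]].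
destruct HW as [HWD [_ [HE2 [_ [C [p [R0 [HR0 Hdec]]]]]]]].
assert (HDall : forall t, 0 < t -> ex_derive s t /\ ex_derive u t /\ ex_derive v t /\ ex_derive y t).
{ intros t Ht. destruct (HD t Ht) as [h1 [_ [h3 _]]]. destruct (HWD t Ht) as [h4 [h5 _]].
  repeat split; auto. apply ex_Dy; auto. }
set (Q := fun t => t * s t ^ 2 * u t * v t / y t).
assert (HexQ : forall t, 0 < t -> ex_derive Q t).
{ intros t Ht. destruct (HDall t Ht) as [h1 [h2 [h3 h4]]]. pose proof (Hynz t Ht).
  unfold Q. auto_derive. repeat split; auto. }
assert (HDQ : forall t, 0 < t -> Derive Q t =
   -2 * t * s t ^ 2 * (x t / y t) * v t ^ 2 - t * s t ^ 2 * (2 * y t ^ 2 + gamma / 2 * s t ^ 2) * u t ^ 2 / y t ^ 2).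
{ intros t Ht. destruct (HDall t Ht) as [h1 [h2 [h3 h4]]]. pose proof (Hynz t Ht).
  pose proof (eq_ii gamma n m beta s z u v t (proj1 Hg) HNO0 HW0 Ht) as Hii. fold x in Hii.
  specialize (HE2 t Ht). fold y in HE2.
  apply is_derive_unique. unfold Q. auto_derive. repeat split; auto.
  change (Derive (fun x => s x) t) with (Derive s t). change (Derive (fun x => u x) t) with (Derive u t).
  change (Derive (fun x => v x) t) with (Derive v t). change (Derive (fun x => y x) t) with (Derive y t).
  transitivity (((s t ^ 2 * u t + 2 * t * s t * Derive s t * u t + t * s t ^ 2 * Derive u t) * v t * y t
     + t * s t ^ 2 * u t * (Derive v t * y t - v t * Derive y t)) / y t ^ 2).
  field; auto.
  assert (HS : s t ^ 2 * u t + 2 * t * s t * Derive s t * u t + t * s t ^ 2 * Derive u t = -2 * t * s t ^ 2 * x t * v t).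
  { transitivity (2 * t * ((s t ^ 2 * u t + 2 * t * s t * Derive s t * u t + t * s t ^ 2 * Derive u t) / (2 * t))).
    field; lra. replace ((s t ^ 2 * u t + 2 * t * s t * Derive s t * u t + t * s t ^ 2 * Derive u t) / (2 * t))
      with (- (s t ^ 2 * x t * v t)) by lra. ring. }
  assert (HV : Derive v t * y t - v t * Derive y t = - ((2 * y t ^ 2 + gamma / 2 * s t ^ 2) * u t)) by lra.
  rewrite HS, HV. field; auto. }
assert (HDQle : forall t, 0 < t -> Derive Q t <= 0).
{ intros t Ht. rewrite HDQ by auto. pose proof (Hxy t Ht). pose proof (Hynz t Ht).
  assert (0 < y t ^ 2) by (apply pow2_gt_0; auto).
  assert (0 <= t * s t ^ 2) by (pose proof (pow2_ge_0 (s t)); nra).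
  assert (0 <= t * s t ^ 2 * (x t / y t) * v t ^ 2).
  { apply Rmult_le_pos. apply Rmult_le_pos; lra. apply pow2_ge_0. }
  assert (0 <= t * s t ^ 2 * (2 * y t ^ 2 + gamma / 2 * s t ^ 2) * u t ^ 2 / y t ^ 2).
  { unfold Rdiv. apply Rmult_le_pos. apply Rmult_le_pos. apply Rmult_le_pos. lra.
    pose proof (pow2_ge_0 (s t)). nra. apply pow2_ge_0. apply Rlt_le, Rinv_0_lt_compat; auto. }
  lra. }
assert (HQmono : forall a b, 0 < a <= b -> Q b <= Q a).
{ intros a0 b Hab. apply nonincr. lra. intros t Ht. split. apply HexQ; lra. apply HDQle; lra. }
assert (LQ0 : lim0r Q 0).
{ apply (lim0r_ext (fun t => ((s0 * (1 + es t)) ^ 2 * (u0 * (1 + eu t)) * (v0 * (1 + ev t)) * Rpower t (2 * INR n + 2 * k))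
          * (t ^ 2 / (t * y t))) _ _ 1). lra.
  intros t Ht. unfold Q. rewrite Rpow_2n2k by lra. rewrite Hs by lra. rewrite (proj1 (Huv t ltac:(lra))), (proj2 (Huv t ltac:(lra))).
  pose proof (Hynz t ltac:(lra)). field. split; lra.
  apply (lim0r_bmult _ _ M d); auto.
  replace 0 with ((s0 * (1 + 0)) ^ 2 * (u0 * (1 + 0)) * (v0 * (1 + 0)) * 0) by ring.
  apply lim0r_mult. apply lim0r_mult. apply lim0r_mult. apply lim0r_pow'. apply lim0r_mult. apply lim0r_const.
  apply lim0r_plus. apply lim0r_const. auto.
  apply lim0r_mult. apply lim0r_const. apply lim0r_plus. apply lim0r_const. auto.
  apply lim0r_mult. apply lim0r_const. apply lim0r_plus. apply lim0r_const. auto.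
  apply lim0r_Rpower. lra. }
assert (LQinf : forall e, 0 < e -> exists R1, forall t, R1 < t -> Rabs (Q t) < e).
{ intros e He. set (K' := (1 + Rabs Cs) ^ 2 * C ^ 2 / c).
  assert (HK' : 0 <= K'). { unfold K'. apply Rmult_le_pos. apply Rmult_le_pos; apply pow2_ge_0. apply Rlt_le, Rinv_0_lt_compat; auto. }
  assert (Hsq : 0 < 2 * sqrt gamma) by (pose proof (sqrt_lt_R0 gamma (proj1 Hg)); lra).
  destruct (exp_decay (2 * sqrt gamma) K' (2 * p + 2) e Hsq He) as [R1 [HR1 H1]].
  exists (Rmax (Rmax R0 Rs) (Rmax R1 1)). intros t Ht.
  pose proof (Rmax_l R0 Rs). pose proof (Rmax_r R0 Rs). pose proof (Rmax_l R1 1). pose proof (Rmax_r R1 1).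
  pose proof (Rmax_l (Rmax R0 Rs) (Rmax R1 1)). pose proof (Rmax_r (Rmax R0 Rs) (Rmax R1 1)).
  assert (Ht0 : 0 < t) by lra.
  specialize (H1 t ltac:(lra)). rewrite (Rabs_pos_eq K') in H1 by auto.
  rewrite Rpow_2p2 in H1 by auto.
  replace (exp (- (2 * sqrt gamma) * t)) with (exp (- sqrt gamma * t) ^ 2) in H1
    by (simpl; rewrite Rmult_1_r, <- exp_plus; f_equal; ring).
  destruct (Hdec t ltac:(lra)) as [Hu Hv].
  destruct (HCs t ltac:(lra)) as [Hs1 _].
  assert (Hsb : Rabs (s t) <= 1 + Rabs Cs).
  { assert (exp (- a * t) <= 1). { rewrite <- exp_0. destruct (Req_dec (- a * t) 0) as [E|E]. rewrite E; lra.
      apply Rlt_le, exp_increasing. nra. }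
    assert (C1 : Cs * exp (- a * t) <= Rabs Cs). { pose proof (Rle_abs Cs). pose proof (Rabs_pos Cs). pose proof (exp_pos (- a * t)). nra. }
    pose proof (Rabs_triang (s t - 1) 1) as HT. replace (s t - 1 + 1) with (s t) in HT by ring. rewrite Rabs_R1 in HT. lra. }
  specialize (HcY t ltac:(lra)).
  set (X := C * Rpower t p * exp (- sqrt gamma * t)) in *.
  assert (HX0 : 0 <= X) by (pose proof (Rabs_pos (u t)); lra).
  assert (Hq : Rabs (Q t) = t ^ 2 * Rabs (s t) ^ 2 * (Rabs (u t) * Rabs (v t)) / Rabs (t * y t)).
  { unfold Q. replace (t * s t ^ 2 * u t * v t / y t) with (t ^ 2 * s t ^ 2 * (u t * v t) / (t * y t)).
    unfold Rdiv. rewrite !Rabs_mult, Rabs_inv. rewrite <- !RPow_abs. rewrite (Rabs_pos_eq t) by lra. rewrite Rabs_mult, (Rabs_pos_eq t) by lra. ring. field. split. apply Hynz; lra. lra. }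
  assert (Hn1' : t ^ 2 * Rabs (s t) ^ 2 * (Rabs (u t) * Rabs (v t)) <= t ^ 2 * (1 + Rabs Cs) ^ 2 * (X * X)).
  { apply Rmult_le_compat. apply Rmult_le_pos. apply pow2_ge_0. apply pow2_ge_0.
    apply Rmult_le_pos; apply Rabs_pos.
    apply Rmult_le_compat_l. apply pow2_ge_0. apply pow_incr. split. apply Rabs_pos. auto.
    apply Rmult_le_compat; auto; apply Rabs_pos. }
  assert (Hd1 : Rabs (Q t) <= t ^ 2 * (1 + Rabs Cs) ^ 2 * (X * X) / c).
  { rewrite Hq. unfold Rdiv. apply Rmult_le_compat. apply Rmult_le_pos. apply Rmult_le_pos; apply pow2_ge_0.
    apply Rmult_le_pos; apply Rabs_pos. apply Rlt_le, Rinv_0_lt_compat; lra. auto.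
    apply Rinv_le_contravar; auto. }
  apply Rle_lt_trans with (1 := Hd1). apply Rle_lt_trans with (2 := H1). right.
  unfold X, K'. field. lra. }
assert (HQ0 : forall t, 0 < t -> Q t = 0).
{ intros t Ht. apply Rle_antisym.
  - apply (lim0r_ge Q 0 (Q t) t LQ0 Ht). intros a0 Ha0. apply HQmono; lra.
  - apply Rnot_lt_le. intro Hlt. destruct (LQinf (- Q t)) as [R1 HR1]. lra.
    set (b := Rmax R1 t + 1). specialize (HR1 b ltac:(unfold b; pose proof (Rmax_l R1 t); lra)).
    pose proof (HQmono t b ltac:(unfold b; pose proof (Rmax_r R1 t); split; lra)).
    apply Rabs_lt_between in HR1. lra. }
assert (HDQ0 : forall t, 0 < t -> Derive Q t = 0). { intros t Ht. apply Derive0_loc; auto. }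
destruct (s_nz_near0 n beta s z HNO0) as [rho [Hrho Hsnz]].
assert (Hsmall : forall t, 0 < t < rho -> u t = 0 /\ v t = 0).
{ intros t Ht. pose proof (HDQ0 t (proj1 Ht)) as E. rewrite HDQ in E by lra.
  pose proof (Hxy t ltac:(lra)). pose proof (Hynz t ltac:(lra)). pose proof (Hsnz t Ht).
  assert (0 < y t ^ 2) by (apply pow2_gt_0; auto).
  assert (0 < s t ^ 2) by (apply pow2_gt_0; auto).
  assert (0 < t * s t ^ 2) by nra.
  assert (T1 : 0 <= t * s t ^ 2 * (x t / y t) * v t ^ 2).
  { apply Rmult_le_pos. apply Rmult_le_pos; lra. apply pow2_ge_0. }
  assert (T2 : 0 <= t * s t ^ 2 * (2 * y t ^ 2 + gamma / 2 * s t ^ 2) * u t ^ 2 / y t ^ 2).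
  { unfold Rdiv. apply Rmult_le_pos. apply Rmult_le_pos. apply Rmult_le_pos. lra.
    nra. apply pow2_ge_0. apply Rlt_le, Rinv_0_lt_compat; auto. }
  assert (Ev : t * s t ^ 2 * (x t / y t) * v t ^ 2 = 0) by lra.
  assert (Eu : t * s t ^ 2 * (2 * y t ^ 2 + gamma / 2 * s t ^ 2) * u t ^ 2 / y t ^ 2 = 0) by lra.
  split.
  - apply Rmult_integral in Eu. destruct Eu as [Eu|Eu].
    apply Rmult_integral in Eu. destruct Eu as [Eu|Eu].
    apply Rmult_integral in Eu. destruct Eu as [Eu|Eu]. lra. nra.
    destruct (Req_dec (u t) 0) as [EE|EE]; auto; exfalso; apply (pow_nonzero _ 2 EE Eu).
    pose proof (Rinv_0_lt_compat _ H2). lra.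
  - apply Rmult_integral in Ev. destruct Ev as [Ev|Ev].
    apply Rmult_integral in Ev. destruct Ev as [Ev|Ev]. lra. lra.
    destruct (Req_dec (v t) 0) as [EE|EE]; auto; exfalso; apply (pow_nonzero _ 2 EE Ev). }
destruct (proj1 (lim0r_eps _ _) Heu (1/2)) as [d1 [Hd1 H1]]. lra.
destruct (proj1 (lim0r_eps _ _) Hev (1/2)) as [d2 [Hd2 H2]]. lra.
set (t := Rmin rho (Rmin d1 d2) / 2).
assert (0 < Rmin rho (Rmin d1 d2)) by (apply Rmin_pos; auto; apply Rmin_pos; auto).
pose proof (Rmin_l rho (Rmin d1 d2)). pose proof (Rmin_r rho (Rmin d1 d2)). pose proof (Rmin_l d1 d2). pose proof (Rmin_r d1 d2).
assert (Ht : 0 < t) by (unfold t; lra).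
destruct (Hsmall t ltac:(unfold t; split; lra)) as [Hu0 Hv0].
specialize (H1 t ltac:(unfold t; split; lra)). specialize (H2 t ltac:(unfold t; split; lra)).
rewrite Rminus_0_r in H1, H2. apply Rabs_lt_between in H1. apply Rabs_lt_between in H2.
destruct (Huv t Ht) as [Eu Ev]. rewrite Hu0 in Eu. rewrite Hv0 in Ev.
pose proof (Rpower_pos' t k).
split.
- symmetry in Eu. apply Rmult_integral in Eu. destruct Eu as [W|W]. apply Rmult_integral in W. destruct W; lra. lra.
- symmetry in Ev. apply Rmult_integral in Ev. destruct Ev as [W|W]. apply Rmult_integral in W. destruct W; lra. lra.
Qed.

Theorem theorem3 (n : nat) (beta gamma : R) (s z : R -> R) :
  (1 <= n)%nat -> 0 < beta -> 0 < gamma <= 1 ->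
  NO_profile n beta s z ->
  forall m : Z,
    ~ (exists u v : R -> R,
         W_perturbation gamma n m s z u v /\
         exists r, 0 < r /\ (u r <> 0 \/ v r <> 0)).
Proof.
intros Hn Hb Hg HNO m [u [v [HW [r0 [Hr0 Hnz]]]]].
pose proof HW as HW0.
destruct HW as [_ [_ [_ [[k [u0 [v0 [eu [ev [Hk [Heu [Hev Huv]]]]]]]] _]]]].
assert (Hnm : IZR (-2 * Z.of_nat n) = -2 * INR n).
{ rewrite mult_IZR, <- INR_IZR_INZ. reflexivity. }
assert (H0 : u0 = 0 /\ v0 = 0).
{ destruct (Z.eq_dec m 0) as [E|E].
  { apply (Qcase gamma n m beta s z u v k u0 v0 eu ev); auto. left. subst. reflexivity. }
  destruct (Z_le_gt_dec 1 m) as [E1|E1].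
  { apply (Qcase gamma n m beta s z u v k u0 v0 eu ev); auto. right. left. apply IZR_le in E1. exact E1. }
  destruct (Z_le_gt_dec m (-2 * Z.of_nat n - 1)) as [E2|E2].
  { apply (Qcase gamma n m beta s z u v k u0 v0 eu ev); auto. right. right. apply IZR_le in E2.
    rewrite minus_IZR, Hnm in E2. exact E2. }
  apply (indicial gamma n m beta s z u v k u0 v0 eu ev); auto. lra.
  assert (E3 : (-2 * Z.of_nat n <= m)%Z) by lia. assert (E4 : (m <= -1)%Z) by lia.
  apply IZR_le in E3. apply IZR_le in E4. rewrite Hnm in E3. split; auto. }
destruct H0 as [Hu0 Hv0]. destruct (Huv r0 Hr0) as [Eu Ev]. rewrite Hu0 in Eu. rewrite Hv0 in Ev.
destruct Hnz as [Hnz|Hnz]; apply Hnz; [rewrite Eu | rewrite Ev]; ring.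
Qed.
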